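(* Let $n\geq 2$, $N=\binom{n}{2}$ and $q\geq N$. For $j=1,\dots,q$ let $L^j$ be an $n\times 2$ matrix whose $2n$ entries are independent indeterminates (distinct matrices using disjoint sets of indeterminates). For $i=1,\dots,N$ let $p^i(L^j)$ denote the $i$-th $2\times 2$ minor of $L^j$ (the minors indexed by the $N$ pairs of rows in a fixed order). Form the $N\times q$ matrix with entries $p^i(L^j)$. Then the determinant of any $N\times N$ submatrix of this matrix (obtained by choosing $N$ columns) is an irreducible polynomial.
   Context: Polynomials are over $\mathbb{R}$ in all the indeterminates appearing. *)

(* Defs.v *)
From HB Require Import structures.
From mathcomp Require Import all_boot all_algebra.
From mathcomp Require Import reals.
From mathcomp Require Import mpoly.
Set Implicit Arguments. Unset Strict Implicit. Unset Printing Implicit Defensive.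
Import GRing.Theory.
Local Open Scope ring_scope.

(* Irreducible element of a (commutative) ring: not a unit, and any
   factorization has a unit factor (0 = 0 * 0 is thus excluded). *)
Definition irreducible_elt (A : comUnitRingType) (p : A) : Prop :=
  p \isn't a GRing.unit /\
  forall a b : A, p = a * b -> a \is a GRing.unit \/ b \is a GRing.unit.

(* Indeterminates: one for each (j, r, c), j < q (matrix L^j), r < n (row),
   c < 2 (column). *)
Definition nvars (q n : nat) : nat := #|{: 'I_q * ('I_n * 'I_2)}|.

Definition Lvar (R : realType) (q n : nat) (j : 'I_q) (r : 'I_n) (c : 'I_2)
  : {mpoly R[nvars q n]} := 'X_(enum_rank (j, (r, c))).

(* The pairs of rows r1 < r2, as sorted 2-tuples; enumerated in a fixed order
   (the enum order of this finset). There are 'C(n,2) of them (card_row_pairs). *)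
Definition row_pairs (n : nat) : {set 2.-tuple 'I_n} :=
  [set t : 2.-tuple 'I_n | sorted ltn (map val t)].

Definition minor2 (R : realType) (q n : nat) (t : 2.-tuple 'I_n) (j : 'I_q)
  : {mpoly R[nvars q n]} :=
  \det (\matrix_(a < 2, b < 2) Lvar R j (tnth t a) b).

Definition plucker_mx (R : realType) (q n : nat)
  : 'M[{mpoly R[nvars q n]}]_(#|row_pairs n|, q) :=
  \matrix_(i < #|row_pairs n|, j < q) minor2 R (enum_val i) j.

Lemma card_row_pairs n : #|row_pairs n| = 'C(n, 2).
Proof. by rewrite /row_pairs card_ltn_sorted_tuples. Qed.

(* Main.v *)
Require Import Defs.
From HB Require Import structures.
From mathcomp Require Import all_boot all_algebra.
From mathcomp Require Import reals.
From mathcomp Require Import mpoly.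
From mathcomp Require Import zify ring.
Set Implicit Arguments. Unset Strict Implicit. Unset Printing Implicit Defensive.
Import GRing.Theory.
Local Open Scope ring_scope.

Section Gen.
Variable (R : realType) (k : nat).
Local Notation MP := {mpoly R[k]}.

Lemma mpoly_fun_eq (S : ringType) (F G : MP -> S) :
  {morph F : x y / x + y} -> {morph G : x y / x + y} ->
  {morph F : x y / x * y} -> {morph G : x y / x * y} ->
  F 0 = 0 -> G 0 = 0 -> F 1 = 1 -> G 1 = 1 ->
  (forall c, F c%:MP = G c%:MP) -> (forall i, F 'X_i = G 'X_i) -> F =1 G.
Proof.
move=> FD GD FM GM F0 G0 F1 G1 FC FX p.
have Fe (H : MP -> S) : {morph H : x y / x * y} -> H 1 = 1 ->
   forall x e, H (x ^+ e) = H x ^+ e.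
  by move=> HM H1 x; elim=> [|e IH]; rewrite ?expr0 // !exprS HM IH.
elim/mpolyind: p => [|c m p _ _ IH]; first by rewrite F0 G0.
rewrite FD GD IH -mul_mpolyC FM GM FC mpolyXE_id.
rewrite (big_morph F FM F1) (big_morph G GM G1); congr (_ * _ + _).
by apply: eq_bigr => i _; rewrite !Fe // FX.
Qed.

Lemma mmapXi (S : comRingType) (f : {rmorphism R -> S}) h i : mmap f h ('X_i : MP) = h i.
Proof. by rewrite mmapX mmap1U. Qed.
Lemma arith1 (a b : nat) : (a + b).-1 = 1%N -> (0 < a)%N -> (0 < b)%N -> (a <= 1)%N /\ (b <= 1)%N.
Proof. lia. Qed.
Lemma arith2 (a b : nat) : (a + b).-1 = 2%N -> (0 < a)%N -> (0 < b)%N -> (a <= 1)%N \/ (b <= 1)%N.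
Proof. lia. Qed.

Lemma size_split (S : idomainType) (F G : {poly S}) (c : S) (e : nat) :
  c != 0 -> F * G = 'X^e * c%:P ->
  (size F + size G).-1 = e.+1 /\ (0 < size F)%N /\ (0 < size G)%N.
Proof.
move=> nz E.
have sE : size (F * G) = e.+1.
  by rewrite E mulrC size_mulXn ?polyC_eq0 // size_polyC nz addn1.
have nzF : F != 0 by apply/eqP => h; move: sE; rewrite h mul0r size_poly0.
have nzG : G != 0 by apply/eqP => h; move: sE; rewrite h mulr0 size_poly0.
by rewrite -size_mul // sE !size_poly_gt0.
Qed.
End Gen.

Section Main.
Variable (R : realType) (q n : nat).
Local Notation K := (nvars q n).
Local Notation MP := {mpoly R[K]}.
Local Notation PP := {poly {mpoly R[K]}}.

Definition scal (P : pred 'I_K) (p : MP) : PP :=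
  mmap (@polyC MP \o @mpolyC K R) (fun i => if P i then 'X * ('X_i : MP)%:P else ('X_i : MP)%:P) p.
Definition ren (h : 'I_K -> MP) (p : MP) : MP := mmap (@mpolyC K R) h p.
Definition zer (P : pred 'I_K) := ren (fun i => if P i then 0 else 'X_i).

Lemma scalD P : {morph scal P : x y / x + y}. Proof. by move=> x y; rewrite /scal rmorphD. Qed.
Lemma scalM P : {morph scal P : x y / x * y}. Proof. by move=> x y; rewrite /scal rmorphM. Qed.
Lemma scal0 P : scal P 0 = 0. Proof. by rewrite /scal rmorph0. Qed.
Lemma scal1 P : scal P 1 = 1. Proof. by rewrite /scal rmorph1. Qed.
Lemma scalC P c : scal P c%:MP = (c%:MP)%:P. Proof. by rewrite /scal mmapC. Qed.
Lemma scalX P i : scal P 'X_i = if P i then 'X * ('X_i : MP)%:P else ('X_i : MP)%:P.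
Proof. by rewrite /scal mmapXi. Qed.
Lemma renD h : {morph ren h : x y / x + y}. Proof. by move=> x y; rewrite /ren rmorphD. Qed.
Lemma renM h : {morph ren h : x y / x * y}. Proof. by move=> x y; rewrite /ren rmorphM. Qed.
Lemma ren0 h : ren h 0 = 0. Proof. by rewrite /ren rmorph0. Qed.
Lemma ren1 h : ren h 1 = 1. Proof. by rewrite /ren rmorph1. Qed.
Lemma renC h c : ren h c%:MP = c%:MP. Proof. by rewrite /ren mmapC. Qed.
Lemma renX h i : ren h 'X_i = h i.
Proof. by rewrite /ren mmapXi. Qed.

Lemma scal_at1 P p : (scal P p).[1] = p.
Proof.
apply: (@mpoly_fun_eq R K MP (fun p => (scal P p).[1]) id) => //=.
- by move=> x y; rewrite scalD hornerD.
- by move=> x y; rewrite scalM hornerM.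
- by rewrite scal0 horner0.
- by rewrite scal1 hornerC.
- by move=> c; rewrite scalC hornerC.
- by move=> i; rewrite scalX; case: (P i); rewrite ?hornerM ?hornerX ?hornerC ?mul1r.
Qed.

Lemma scal_at0 P p : (scal P p).[0] = zer P p.
Proof.
apply: (@mpoly_fun_eq R K MP (fun p => (scal P p).[0]) (zer P)) => //; rewrite /zer.
- by move=> x y; rewrite scalD hornerD.
- exact: renD.
- by move=> x y; rewrite scalM hornerM.
- exact: renM.
- by rewrite scal0 horner0.
- exact: ren0.
- by rewrite scal1 hornerC.
- exact: ren1.
- by move=> c; rewrite scalC hornerC /zer renC.
- move=> i; rewrite scalX /zer renX; case: (P i); rewrite ?hornerC //.
  by rewrite hornerM hornerX hornerC mul0r.
Qed.

Lemma ren_comp h1 h2 p : ren h1 (ren h2 p) = ren (fun i => ren h1 (h2 i)) p.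
Proof.
apply: (@mpoly_fun_eq R K MP (fun p => ren h1 (ren h2 p))) => //=.
- by move=> x y; rewrite !renD.
- exact: renD.
- by move=> x y; rewrite !renM.
- exact: renM.
- by rewrite !ren0.
- exact: ren0.
- by rewrite !ren1.
- exact: ren1.
- by move=> c; rewrite !renC.
- by move=> i; rewrite !renX.
Qed.

Lemma ren_eq h1 h2 p : h1 =1 h2 -> ren h1 p = ren h2 p.
Proof.
move=> e; apply: (@mpoly_fun_eq R K MP (ren h1)); rewrite ?ren0 ?ren1 //;
 try exact: renD; try exact: renM.
- by move=> c; rewrite !renC.
- by move=> i; rewrite !renX.
Qed.

Lemma ren_id p : ren (fun i => 'X_i) p = p.
Proof.
apply: (@mpoly_fun_eq R K MP _ id); rewrite ?ren0 ?ren1 //; try exact: renD; try exact: renM.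
- by move=> c; rewrite !renC.
- by move=> i; rewrite !renX.
Qed.


Lemma scal_const P x : (size (scal P x) <= 1)%N -> scal P x = x%:P.
Proof.
move=> /size1_polyC E; rewrite {1}E; congr (_%:P).
by have := scal_at1 P x; rewrite {1}E hornerC.
Qed.

Lemma deg0 P x y : x * y != 0 ->
  scal P (x * y) = (x * y)%:P -> scal P x = x%:P /\ scal P y = y%:P.
Proof.
move=> nz E; rewrite -[(x * y)%:P]mul1r -(expr0 'X) scalM in E.
have sE : (size (scal P x) + size (scal P y)).-1 = 1%N /\ (0 < size (scal P x))%N /\ (0 < size (scal P y))%N.
  exact: size_split nz E.
case: sE => sE [sF sG].
by have [h1 h2] := arith1 sE sF sG; split; apply: scal_const.
Qed.

Lemma deg1 P x y : x * y != 0 ->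
  scal P (x * y) = 'X * (x * y)%:P -> scal P x = x%:P \/ scal P y = y%:P.
Proof.
move=> nz E; rewrite -(expr1 'X) scalM in E.
have sE : (size (scal P x) + size (scal P y)).-1 = 2%N /\ (0 < size (scal P x))%N /\ (0 < size (scal P y))%N.
  exact: size_split nz E.
case: sE => sE [sF sG].
by have [h|h] := arith2 sE sF sG; [left|right]; apply: scal_const.
Qed.

Lemma N_zer P x : scal P x = x%:P -> zer P x = x.
Proof. by move=> E; rewrite -scal_at0 E hornerC. Qed.


Lemma det2 (S : comRingType) (A : 'M[S]_2) : \det A = A 0 0 * A 1 1 - A 0 1 * A 1 0.
Proof.
rewrite (expand_det_row _ 0) !big_ord_recl big_ord0 addr0 /cofactor !det_mx11 /=.
rewrite !mxE /= expr0 mul1r expr1 mulN1r mulrN.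
by congr (A _ _ * A _ _ - A _ _ * A _ _); apply: val_inj.
Qed.


Local Notation T := ('I_q * ('I_n * 'I_2))%type.
Definition vr (j : 'I_q) (r : 'I_n) (c : 'I_2) : 'I_K := enum_rank ((j, (r, c)) : T).
Definition grp (j : 'I_q) (c : 'I_2) : pred 'I_K :=
  fun i => ((enum_val i).1 == j) && ((enum_val i).2.2 == c).
Definition blk (j : 'I_q) : pred 'I_K := fun i => (enum_val i).1 == j.

Lemma ev_vr j r c : enum_val (vr j r c) = (j, (r, c)).
Proof. exact: enum_rankK. Qed.

Lemma LvarE j r c : Lvar R j r c = 'X_(vr j r c).
Proof. by []. Qed.

Lemma minor2E t j : minor2 R t j =
  'X_(vr j (tnth t 0) 0) * 'X_(vr j (tnth t 1) 1) - 'X_(vr j (tnth t 0) 1) * 'X_(vr j (tnth t 1) 0).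
Proof. by rewrite /minor2 det2 !mxE. Qed.

Lemma scalB P : {morph scal P : x y / x - y}. Proof. by move=> x y; rewrite /scal rmorphB. Qed.

Lemma scal_minor j c t j' : scal (grp j c) (minor2 R t j') =
  (minor2 R t j')%:P * (if j' == j then 'X else 1).
Proof.
rewrite minor2E scalB !scalM !scalX /grp !ev_vr /=.
case: (j' == j) => /=; last by rewrite !polyCB !polyCM mulr1.
case: c => [[|[|//]] ?] /=; rewrite !polyCB !polyCM; ring.
Qed.


Local Notation N := #|row_pairs n|.
Variable (s : 'I_N -> 'I_q) (hs : {homo s : i j / (i < j)%N}).

Lemma s_inj : injective s.
Proof.
move=> a b E; apply/val_inj/eqP; case: (ltngtP a b) => // h.
  by have := hs h; rewrite E ltnn.
by have := hs h; rewrite E ltnn.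
Qed.

Definition A := colsub s (plucker_mx R q n).
Definition D := \det A.

Lemma AE i k : A i k = minor2 R (enum_val i) (s k).
Proof. by rewrite !mxE. Qed.

Lemma scal_det P (M : 'M[MP]_N) : scal P (\det M) = \det (map_mx (scal P) M).
Proof. by rewrite det_map_mx. Qed.

Lemma scal_D j c : scal (grp j c) D = (if [exists k, s k == j] then 'X else 1) * D%:P.
Proof.
rewrite /D scal_det.
have -> : map_mx (scal (grp j c)) A =
    map_mx polyC A *m diag_mx (\row_k (if s k == j then 'X else 1)).
  by apply/matrixP=> i k; rewrite mul_mx_diag !mxE scal_minor.
rewrite det_mulmx det_diag det_map_mx mulrC; congr (_ * _).
case: existsP => [[k0 /eqP hk]|hn].
  rewrite (bigD1 k0) //= mxE hk eqxx big1 ?mulr1 // => k hk0.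
  rewrite mxE; case: eqP => // E; case/negP: hk0; apply/eqP/s_inj; by rewrite E hk.
rewrite big1 // => k _; rewrite mxE; case: eqP => // E; case: hn; by exists k; rewrite E.
Qed.


Definition val0 (i : 'I_K) : R :=
  let: (j, (r, c)) := enum_val i in
  if [pick k | s k == j] is Some k then (r == tnth (enum_val k) c)%:R else 0.

Lemma val0_vr k r c : val0 (vr (s k) r c) = (r == tnth (enum_val k) c)%:R.
Proof.
rewrite /val0 ev_vr; case: pickP => [k' /eqP/s_inj -> //| /(_ k)].
by rewrite eqxx.
Qed.

Lemma ord2 (x : 'I_2) : x = 0 \/ x = 1.
Proof. by case: x => [[|[|//]] Hx]; [left|right]; apply: val_inj. Qed.

Lemma pair_lt (t : 2.-tuple 'I_n) : t \in row_pairs n -> (tnth t 0%R < tnth t 1%R)%N.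
Proof.
rewrite inE; case: t => [[|a [|b [|? ?]]] //] h.
by rewrite /= andbT.
Qed.

Lemma meval_minor i k : meval val0 (minor2 R (enum_val i) (s k)) = (i == k)%:R.
Proof.
rewrite minor2E mevalB !mevalM !mevalXU !val0_vr.
set t := enum_val i; set u := enum_val k.
have lt_t : (tnth t 0%R < tnth t 1%R)%N by apply: pair_lt; apply: enum_valP.
have lt_u : (tnth u 0%R < tnth u 1%R)%N by apply: pair_lt; apply: enum_valP.
have h2 : (tnth t 0 == tnth u 1) && (tnth t 1 == tnth u 0) = false.
  apply/negbTE/negP => /andP[/eqP e1 /eqP e2]; move: lt_t; rewrite e1 e2 => h.
  by have := ltn_trans h lt_u; rewrite ltnn.
have h1 : (tnth t 0 == tnth u 0) && (tnth t 1 == tnth u 1) = (i == k).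
  apply/andP/eqP => [[/eqP e1 /eqP e2]|ik]; last by rewrite /t /u ik !eqxx.
  apply: enum_val_inj; apply: eq_from_tnth => x.
  by case: (ord2 x) => ->.
by rewrite -!natrM !mulnb h1 h2 subr0.
Qed.

Lemma meval_D : meval val0 D = 1.
Proof.
rewrite /D -det_map_mx.
have -> : map_mx (meval val0) A = 1%:M.
  by apply/matrixP=> i k; rewrite !mxE meval_minor.
exact: det1.
Qed.

Lemma D_neq0 : D != 0.
Proof. by apply/eqP => h; have := meval_D; rewrite h meval0 => /eqP; rewrite eq_sym oner_eq0. Qed.


Lemma renB h : {morph ren h : x y / x - y}. Proof. by move=> x y; rewrite /ren rmorphB. Qed.

Lemma vr_ev i : vr (enum_val i).1 (enum_val i).2.1 (enum_val i).2.2 = i.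
Proof. by rewrite /vr -!surjective_pairing enum_valK. Qed.

Lemma kill (Ap Bp : pred 'I_K) h1 h2 f g :
  zer Bp f = f -> zer Ap g = g -> ren h1 (f * g) = 0 -> f != 0 ->
  (forall i, ren h1 (if Bp i then 0 else 'X_i) = if Bp i then 0 else 'X_i) ->
  (forall i, ren h2 (ren h1 (if Ap i then 0 else 'X_i)) = if Ap i then 0 else 'X_i) ->
  g = 0.
Proof.
move=> zf zg E nz H1 H2.
have sf : ren h1 f = f.
  transitivity (ren h1 (zer Bp f)); first by rewrite zf.
  by rewrite /zer ren_comp -{2}zf; apply: ren_eq.
have sg : ren h1 g = 0.
  by move: E; rewrite renM sf => /eqP; rewrite mulf_eq0 (negbTE nz) => /eqP.
transitivity (ren h2 (ren h1 (zer Ap g))); last by rewrite zg sg ren0.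
by rewrite /zer !ren_comp -{1}zg; apply: ren_eq => i; rewrite -ren_comp.
Qed.


Definition hcol j c c' (i : 'I_K) : MP :=
  if grp j c' i then 'X_(vr j (enum_val i).2.1 c) else 'X_i.

Lemma grp_vr j c j' r c' : grp j c (vr j' r c') = (j' == j) && (c' == c).
Proof. by rewrite /grp ev_vr. Qed.

Lemma ren_det h (M : 'M[MP]_N) : ren h (\det M) = \det (map_mx (ren h) M).
Proof. by rewrite det_map_mx. Qed.

Lemma col_kill_D k c c' : c != c' -> ren (hcol (s k) c c') D = 0.
Proof.
move=> ne; rewrite /D ren_det (expand_det_col _ k) big1 // => i _.
rewrite !mxE minor2E renB !renM !renX /hcol !grp_vr !ev_vr eqxx /=.
case: (ord2 c) ne => ->; case: (ord2 c') => -> //= _; by rewrite subrr mul0r.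
Qed.

Lemma col_H1 j c c' i : ren (hcol j c c') (if grp j c' i then 0 else 'X_i) =
  if grp j c' i then 0 else 'X_i.
Proof. by case: ifP => h; rewrite ?ren0 // renX /hcol h. Qed.

Lemma col_H2 j c c' i : c != c' ->
  ren (hcol j c' c) (ren (hcol j c c') (if grp j c i then 0 else 'X_i)) =
  if grp j c i then 0 else 'X_i.
Proof.
move=> ne; case: ifP => h; rewrite ?ren0 // !renX /hcol.
case: ifP => h'; last by rewrite renX /hcol h.
rewrite renX /hcol grp_vr eqxx eqxx /=.
move: h'; rewrite /grp => /andP[/eqP e1 /eqP e2].
by rewrite ev_vr /= -e1 -e2 vr_ev.
Qed.


Definition hblk j j' (i : 'I_K) : MP :=
  if blk j' i then 'X_(vr j (enum_val i).2.1 (enum_val i).2.2) else 'X_i.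

Lemma blk_vr j j' r c : blk j (vr j' r c) = (j' == j).
Proof. by rewrite /blk ev_vr. Qed.

Lemma blk_kill_D k l : k != l -> ren (hblk (s k) (s l)) D = 0.
Proof.
move=> ne; have nes : s k != s l by apply: contra ne => /eqP/s_inj ->.
rewrite /D ren_det -det_tr; apply: (determinant_alternate ne) => i.
rewrite !mxE !minor2E !renB !renM !renX /hblk !blk_vr eqxx (negbTE nes) /=.
by rewrite !ev_vr.
Qed.

Lemma blk_H1 j j' i : ren (hblk j j') (if blk j' i then 0 else 'X_i) =
  if blk j' i then 0 else 'X_i.
Proof. by case: ifP => h; rewrite ?ren0 // renX /hblk h. Qed.

Lemma blk_H2 j j' i : j != j' ->
  ren (hblk j' j) (ren (hblk j j') (if blk j i then 0 else 'X_i)) =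
  if blk j i then 0 else 'X_i.
Proof.
move=> ne; case: ifP => h; rewrite ?ren0 // !renX /hblk.
case: ifP => h'; last by rewrite renX /hblk h.
rewrite renX /hblk blk_vr eqxx ev_vr /=.
move: h'; rewrite /blk => /eqP e1.
by rewrite -e1 vr_ev.
Qed.

Lemma zer_blk j f : zer (grp j 0) f = f -> zer (grp j 1) f = f -> zer (blk j) f = f.
Proof.
move=> E0 E1; transitivity (zer (grp j 0) (zer (grp j 1) f)); last by rewrite E1 E0.
rewrite /zer ren_comp; apply: ren_eq => i.
rewrite /grp /blk; case Eb: ((enum_val i).1 == j) => /=; last by rewrite renX /= Eb.
case: (ord2 (enum_val i).2.2) => e; rewrite e; last by rewrite eqxx ren0.
by rewrite /= renX /= Eb e.
Qed.


Lemma zer_sub (P Q : pred 'I_K) y : (forall i, P i -> Q i) -> zer Q y = y -> zer P y = y.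
Proof.
move=> sub E; transitivity (zer P (zer Q y)); first by rewrite E.
rewrite -{2}E /zer ren_comp; apply: ren_eq => i.
case: ifP => h; first by rewrite ren0.
rewrite renX; case: ifP => // /sub; by rewrite h.
Qed.

Lemma zer_union (P Q : pred 'I_K) y : zer P y = y -> zer Q y = y ->
  zer (fun i => P i || Q i) y = y.
Proof.
move=> EP EQ; transitivity (zer P (zer Q y)); last by rewrite EQ EP.
rewrite /zer ren_comp; apply: ren_eq => i.
by case: (Q i); rewrite ?orbT ?ren0 // orbF renX.
Qed.

Lemma zer_const y : (forall j c, zer (grp j c) y = y) -> y = (meval (fun _ => 0) y)%:MP.
Proof.
move=> H.
have Hm : forall m, zer (fun i : 'I_K => (i < m)%N) y = y.
  elim=> [|m IH].
    transitivity (ren (fun i => 'X_i) y); last exact: ren_id.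
    by apply: ren_eq => i; rewrite ltn0.
  apply: (@zer_sub _ (fun i => (i < m)%N || (val i == m))).
    by move=> i; rewrite ltnS leq_eqVlt orbC.
  apply: zer_union => //.
  case: (ltnP m K) => h.
    pose i0 := Ordinal h.
    apply: (@zer_sub _ (grp (enum_val i0).1 (enum_val i0).2.2)); last exact: H.
    move=> i /eqP e; have -> : i = i0 by apply: val_inj.
    by rewrite /grp !eqxx.
  apply: (zer_sub _ IH) => i /eqP e; have := ltn_ord i; rewrite e; lia.
rewrite -{1}(Hm K).
apply: (@mpoly_fun_eq R K MP (zer (fun i : 'I_K => (i < K)%N)) (fun p => (meval (fun _ => 0) p)%:MP)) => //.
- exact: renD.
- by move=> u v; rewrite mevalD rmorphD.
- exact: renM.
- by move=> u v; rewrite mevalM rmorphM.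
- exact: ren0.
- by rewrite meval0 rmorph0.
- exact: ren1.
- by rewrite meval1 rmorph1.
- by move=> c; rewrite /zer renC mevalC.
- by move=> i; rewrite /zer renX mevalXU ltn_ord rmorph0.
Qed.

Lemma const_unit (y : MP) : y != 0 -> y = (meval (fun _ => 0) y)%:MP -> y \is a GRing.unit.
Proof.
set c := meval _ y => nz E.
have nzc : c != 0 by apply: contra nz => /eqP c0; rewrite E c0 rmorph0.
by apply/unitrP; exists (c^-1)%:MP; rewrite E -!rmorphM mulVf // mulfV // rmorph1.
Qed.


Lemma ex_s k : [exists k', s k' == s k].
Proof. by apply/existsP; exists k. Qed.

Lemma dich j c a b : a * b = D -> [exists k, s k == j] ->
  scal (grp j c) a = a%:P \/ scal (grp j c) b = b%:P.
Proof.
move=> E ex; apply: deg1; first by rewrite E D_neq0.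
by rewrite E scal_D ex.
Qed.

Lemma both j c a b : a * b = D -> ~~ [exists k, s k == j] ->
  scal (grp j c) a = a%:P /\ scal (grp j c) b = b%:P.
Proof.
move=> E ex; apply: deg0; first by rewrite E D_neq0.
by rewrite E scal_D (negbTE ex) mul1r.
Qed.

Lemma ab_neq0 a b : a * b = D -> a != 0 /\ b != 0.
Proof.
move=> E; have := D_neq0; rewrite -E mulf_eq0 negb_or => /andP[].
by split.
Qed.

Lemma colswap_no k c c' a b : a * b = D -> c != c' ->
  scal (grp (s k) c') a = a%:P -> scal (grp (s k) c) b = b%:P -> False.
Proof.
move=> E ne Na Nb; have [nza nzb] := ab_neq0 E.
have := kill (N_zer Na) (N_zer Nb) _ nza (col_H1 (s k) c c') (fun i => col_H2 (s k) i ne).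
rewrite E col_kill_D // => /(_ erefl) b0.
by move: nzb; rewrite b0 eqxx.
Qed.

Lemma blkswap_no k l a b : a * b = D -> k != l ->
  zer (blk (s l)) a = a -> zer (blk (s k)) b = b -> False.
Proof.
move=> E ne Za Zb; have [nza nzb] := ab_neq0 E.
have nes : s k != s l by apply: contra ne => /eqP/s_inj ->.
have := kill Za Zb _ nza (blk_H1 (s k) (s l)) (fun i => blk_H2 i nes).
rewrite E blk_kill_D // => /(_ erefl) b0.
by move: nzb; rewrite b0 eqxx.
Qed.

Lemma zer_blk2 j c c2 f : c != c2 -> zer (grp j c) f = f -> zer (grp j c2) f = f ->
  zer (blk j) f = f.
Proof.
move=> ne h1 h2; case: (ord2 c) ne h1 => ->; case: (ord2 c2) h2 => -> //= h2 _ h1.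
  exact: zer_blk.
exact: zer_blk.
Qed.

Lemma side a b k0 : a * b = D -> scal (grp (s k0) 0) b = b%:P -> b \is a GRing.unit.
Proof.
move=> E Nb0; have [nza nzb] := ab_neq0 E.
have Nb1 : scal (grp (s k0) 1) b = b%:P.
  have [Na|//] := dich 1 E (ex_s k0).
  by case: (colswap_no (c := 0) (c' := 1) E isT Na Nb0).
have Zb0 := zer_blk (N_zer Nb0) (N_zer Nb1).
apply: const_unit => //; apply: zer_const => j c.
case: (boolP [exists k, s k == j]) => ex; last by have [_ /N_zer] := both c E ex.
have [Na|/N_zer//] := dich c E ex.
case/existsP: ex => k /eqP hk; subst j.
have [c2 ne] : exists c2 : 'I_2, c != c2.
  by case: (ord2 c) => ->; [exists 1|exists 0].
case: (eqVneq k k0) => [ekk|nek].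
  subst k; case: (colswap_no (c := c2) (c' := c) E _ Na _) => //.
    by rewrite eq_sym.
  by case: (ord2 c2) => ->.
have [Na2|Nb2] := dich c2 E (ex_s k).
  have Za := zer_blk2 ne (N_zer Na) (N_zer Na2).
  have nek' : k0 != k by rewrite eq_sym.
  by case: (blkswap_no E nek' Za Zb0).
by case: (colswap_no (c := c2) (c' := c) E _ Na Nb2); rewrite eq_sym.
Qed.


Lemma D_nonunit (k0 : 'I_N) : D \isn't a GRing.unit.
Proof.
apply/negP => u.
have u' : scal (grp (s k0) 0) D \is a GRing.unit by rewrite /scal rmorph_unit.
move: u'; rewrite scal_D ex_s poly_unitE size_XmulC ?D_neq0 //.
Qed.

End Main.

Unset Implicit Arguments.

Theorem lemma3p2 (R : realType) (n q : nat) (hn : (2 <= n)%N)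
  (hq : ('C(n, 2) <= q)%N)
  (s : 'I_#|row_pairs n| -> 'I_q) (hs : {homo s : i j / (i < j)%N}) :
  irreducible_elt (\det (colsub s (plucker_mx R q n))).
Proof.
have hN : (0 < #|row_pairs n|)%N by rewrite card_row_pairs bin_gt0.
pose k0 : 'I_#|row_pairs n| := Ordinal hN.
change (irreducible_elt (D R s)).
split; first exact: (D_nonunit R hs k0).
move=> a b E.
have [Na|Nb] := dich hs 0 (esym E) (ex_s s k0).
  by left; apply: (side hs (a := b) (k0 := k0)) => //; rewrite mulrC E.
by right; apply: (side hs (a := a) (k0 := k0)) => //; rewrite E.
Qed.
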